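(* Let $0<q<1$. Then \[ \frac{q^{2/3}}{(1+q)[1/3]_{q^{2}}[5/6]_{q^{2}}}-\sum_{n=1}^{\infty}\frac{(1-q^{4n+1})(1/2|q^{2})_{n}^{2}(1/3|q^{2})_{n}(2/3|q^{2})_{n-1}}{(1-q^{2})([n]_{q^{2}}!)^{2}(7/6|q^{2})_{n}(5/6|q^{2})_{n+1}}\,q^{2n} =\frac{[1/6]_{q^{2}}}{[1/3]_{q^{2}}^{2}[1/2]_{q^{2}}}\cdot\frac{(q^{4/3},q^{2/3};q^{2})_{\infty}\,q^{11/12}}{(q^{1/3},q^{5/3};q^{2})_{\infty}\,\pi_{q}}. \]
   Context: Let $0<q<1$ and write $q^{x}=e^{x\log q}$. $(z;q)_\infty=\prod_{k\ge0}(1-zq^k)$, $(z_1,z_2;q)_\infty=(z_1;q)_\infty(z_2;q)_\infty$. $[z]_{q^2}=\frac{1-q^{2z}}{1-q^2}$; for integers $n\ge0$, $(x|q^2)_n=\prod_{k=0}^{n-1}[x+k]_{q^2}$ (empty product $=1$); $[0]_{q^2}!=1$, $[n]_{q^2}!=\prod_{k=1}^n[k]_{q^2}$. $\pi_q=(1-q^2)q^{1/4}\frac{(q^2;q^2)_\infty^2}{(q;q^2)_\infty^2}$. *)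

(* Defs.v *)
From Stdlib Require Import Reals.
Open Scope R_scope.

Definition qpow (q x : R) : R := exp (x * ln q).

Definition qnum (q z : R) : R := (1 - qpow q (2 * z)) / (1 - q ^ 2).

Fixpoint qshift (q x : R) (n : nat) : R :=
  match n with
  | O => 1
  | S m => qshift q x m * qnum q (x + INR m)
  end.

Fixpoint qfact (q : R) (n : nat) : R :=
  match n with
  | O => 1
  | S m => qfact q m * qnum q (INR (S m))
  end.

Fixpoint qpoch_part (z b : R) (N : nat) : R :=
  match N with
  | O => 1
  | S m => qpoch_part z b m * (1 - z * b ^ m)
  end.

Definition qpoch_inf_is (z b P : R) : Prop :=
  Un_cv (qpoch_part z b) P.

(* n-th term (n >= 1) of the series *)
Definition term13 (q : R) (n : nat) : R :=
  (1 - q ^ (4 * n + 1)%nat) * (qshift q (1/2) n) ^ 2 * qshift q (1/3) n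
    * qshift q (2/3) (n - 1)%nat
  / ((1 - q ^ 2) * (qfact q n) ^ 2 * qshift q (7/6) n * qshift q (5/6) (n + 1)%nat)
  * q ^ (2 * n)%nat.

(* Main.v *)
Require Import Defs.
From Stdlib Require Import Reals Lra Lia FunctionalExtensionality.
From Coquelicot Require Import Coquelicot.
Open Scope R_scope.


Lemma P_succ z b N : qpoch_part z b (S N) = qpoch_part z b N * (1 - z * b ^ N).
Proof. reflexivity. Qed.

Lemma P_S z b N : qpoch_part z b (S N) = (1 - z) * qpoch_part (z * b) b N.
Proof.
  induction N as [|N IH].
  - simpl. ring.
  - rewrite P_succ, IH, P_succ. simpl. ring.
Qed.

Lemma P_S' z b w N : w = z * b -> qpoch_part z b (S N) = (1 - z) * qpoch_part w b N.
Proof. intros ->. apply P_S. Qed.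

Lemma powle1 b n : 0 <= b <= 1 -> b ^ n <= 1.
Proof. intros h. rewrite <- (pow1 n). apply pow_incr. lra. Qed.

Lemma P_lb z b N : 0 <= z < 1 -> 0 < b < 1 ->
  exp (- (z / (1 - z)) * ((1 - b ^ N) / (1 - b))) <= qpoch_part z b N.
Proof.
  intros [hz0 hz1] [hb0 hb1].
  set (c := z / (1 - z)).
  assert (hc : 0 <= c) by (unfold c; apply Rmult_le_pos; [lra| left; apply Rinv_0_lt_compat; lra]).
  induction N as [|N IH].
  - simpl. replace (- c * ((1 - 1) / (1 - b))) with 0 by (field; lra). rewrite exp_0. lra.
  - rewrite P_succ.
    assert (hbN : 0 < b ^ N <= 1).
    { split. apply pow_lt; lra. apply powle1; lra. }
    set (u := z * b ^ N).
    assert (hu : 0 <= u <= z) by (unfold u; split; [apply Rmult_le_pos; lra| nra]).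
    assert (h1 : exp (- c * b ^ N) <= 1 - u).
    { assert (ht : exp (u / (1 - u)) >= 1 + u / (1 - u)).
      { destruct (Req_dec (u / (1-u)) 0) as [e|e].
        - rewrite e, exp_0. lra.
        - left. apply Rlt_gt, exp_ineq1; auto. }
      assert (hle : - c * b ^ N <= - (u / (1 - u))).
      { assert (u/(1-u) <= c*b^N); [|lra]. unfold c, Rdiv.
        replace (z * /(1-z) * b^N) with (u * /(1-z)) by (unfold u; ring).
        apply Rmult_le_compat_l. lra. apply Rinv_le_contravar; lra. }
      apply Rle_trans with (exp (- (u / (1 - u)))).
      { destruct hle as [hle|hle]. left; apply exp_increasing; auto. rewrite hle; lra. }
      rewrite exp_Ropp.
      assert (hp : 0 < exp (u / (1 - u))) by apply exp_pos.
      apply Rle_trans with (/ (1 + u / (1 - u))); [| right; field; lra].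
      apply Rinv_le_contravar.
      apply Rlt_le_trans with 1. lra. assert (0 <= u/(1-u)) by (apply Rmult_le_pos; [lra| left; apply Rinv_0_lt_compat; lra]). lra.
      lra. }
    replace (- c * ((1 - b ^ S N) / (1 - b))) with
      (- c * ((1 - b ^ N) / (1 - b)) + - c * b ^ N) by (simpl; field; lra).
    rewrite exp_plus.
    apply Rmult_le_compat; try (left; apply exp_pos); auto.
Qed.

Lemma P_lim_pos z b l : 0 <= z < 1 -> 0 < b < 1 -> Un_cv (qpoch_part z b) l -> 0 < l.
Proof.
  intros hz hb hl.
  set (c := z / (1 - z)).
  assert (hc : 0 <= c) by (unfold c; apply Rmult_le_pos; [lra| left; apply Rinv_0_lt_compat; lra]).
  apply Rlt_le_trans with (exp (- c * (1 / (1 - b)))). apply exp_pos.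
  apply Rle_cv_lim with (Un := fun _ => exp (- c * (1 / (1 - b)))) (Vn := qpoch_part z b).
  - intros n. eapply Rle_trans; [|apply P_lb; auto].
    assert (hbn : 0 < b ^ n) by (apply pow_lt; lra).
    assert (H : - c * (1 / (1 - b)) <= - c * ((1 - b ^ n) / (1 - b))).
    { assert (1 / (1 - b) >= (1 - b ^ n) / (1 - b)).
      { unfold Rdiv. apply Rle_ge, Rmult_le_compat_r. left; apply Rinv_0_lt_compat; lra. lra. }
      nra. }
    unfold c in *. destruct H as [H|H]; [left; apply exp_increasing; exact H| right; rewrite H; reflexivity].
  - intros eps he. exists 0%nat. intros. unfold R_dist. rewrite Rminus_diag, Rabs_R0. lra.
  - exact hl.
Qed.

Definition PP y k n := qpoch_part (y ^ k) (y ^ 6) n.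

Definition tY (y : R) (n : nat) : R :=
  (1 - (y ^ 3) ^ (4 * n + 1)) * (PP y 3 n / (1 - y ^ 6) ^ n) ^ 2
   * (PP y 2 n / (1 - y ^ 6) ^ n) * (PP y 4 (n - 1) / (1 - y ^ 6) ^ (n - 1))
  / ((1 - y ^ 6) * (PP y 6 n / (1 - y ^ 6) ^ n) ^ 2 * (PP y 7 n / (1 - y ^ 6) ^ n)
     * (PP y 5 (n + 1) / (1 - y ^ 6) ^ (n + 1)))
  * (y ^ 3) ^ (2 * n).

Definition L0Y y := y ^ 2 / ((1 + y ^ 3) * ((1 - y ^ 2) / (1 - y ^ 6)) * ((1 - y ^ 5) / (1 - y ^ 6))).

Definition GY y n := L0Y y * PP y 4 n * PP y 8 n * PP y 9 n ^ 2 / (PP y 6 n ^ 2 * PP y 7 n * PP y 11 n).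

Lemma PP_pos y k n : 0 < y < 1 -> (1 <= k)%nat -> 0 < PP y k n.
Proof.
  intros hy hk. unfold PP. induction n as [|n IH]. simpl; lra.
  rewrite P_succ. apply Rmult_lt_0_compat; auto.
  assert (y ^ k * (y^6)^n < 1); [|lra].
  assert (y ^ k < 1). { destruct k. lia. simpl. assert (y ^ k <= 1) by (apply powle1; lra). nra. }
  assert (0 < (y^6)^n <= 1). { split. apply pow_lt, pow_lt; lra. apply powle1. split. left; apply pow_lt; lra. apply powle1; lra. }
  assert (0 < y ^ k) by (apply pow_lt; lra). nra.
Qed.

Lemma ypow_lt1 y k : 0 < y < 1 -> (1 <= k)%nat -> 0 < y ^ k < 1.
Proof.
  intros hy hk. split. apply pow_lt; lra.
  destruct k. lia. simpl. assert (y ^ k <= 1) by (apply powle1; lra).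
  assert (0 < y^k) by (apply pow_lt; lra). nra.
Qed.

Lemma tel y M : 0 < y < 1 -> tY y (S M) = GY y M - GY y (S M).
Proof.
  intros hy. unfold tY, GY, PP.
  replace (S M - 1)%nat with M by lia.
  replace (S M + 1)%nat with (S (S M)) by lia.
  rewrite (P_S' (y^3) _ (y^9)) by ring.
  rewrite (P_S' (y^2) _ (y^8)) by ring.
  rewrite (P_S' (y^5) _ (y^11) (S M)) by ring.
  rewrite !P_succ.
  set (Z := (y^6)^M).
  replace ((y ^ 3) ^ (4 * S M + 1)) with (y^15 * Z^2)
    by (unfold Z; rewrite <- !pow_mult, <- !pow_add; f_equal; lia).
  replace ((y ^ 3) ^ (2 * S M)) with (y^6 * Z)
    by (unfold Z; rewrite <- !pow_mult, <- !pow_add; f_equal; lia).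
  replace ((1 - y^6) ^ S (S M)) with ((1-y^6)^2 * (1-y^6)^M) by (simpl; ring).
  replace ((1 - y^6) ^ S M) with ((1-y^6) * (1-y^6)^M) by (simpl; ring).
  set (V := (1-y^6)^M).
  pose proof (PP_pos y 4 M hy) as h4. pose proof (PP_pos y 8 M hy) as h8.
  pose proof (PP_pos y 9 M hy) as h9. pose proof (PP_pos y 6 M hy) as h6.
  pose proof (PP_pos y 7 M hy) as h7. pose proof (PP_pos y 11 M hy) as h11.
  unfold PP in *.
  set (a := qpoch_part (y^4) (y^6) M) in *.
  set (b := qpoch_part (y^8) (y^6) M) in *.
  set (c := qpoch_part (y^9) (y^6) M) in *.
  set (d := qpoch_part (y^6) (y^6) M) in *.
  set (e := qpoch_part (y^7) (y^6) M) in *.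
  set (f := qpoch_part (y^11) (y^6) M) in *.
  assert (hd : 0 < d) by (apply h6; lia).
  assert (he : 0 < e) by (apply h7; lia).
  assert (hf : 0 < f) by (apply h11; lia).
  assert (hV : 0 < V) by (unfold V; apply pow_lt; pose proof (ypow_lt1 y 6 hy); lia || (assert (0<y^6<1) by (apply ypow_lt1; auto; lia); lra)).
  assert (hZ : 0 < Z <= 1) by (unfold Z; split; [apply pow_lt; apply pow_lt; lra| apply powle1; assert (0<y^6<1) by (apply ypow_lt1; auto; lia); lra]).
  assert (hy1 := ypow_lt1 y 1 hy). assert (hy2 := ypow_lt1 y 2 hy). assert (hy3 := ypow_lt1 y 3 hy).
  assert (hy4 := ypow_lt1 y 4 hy). assert (hy5 := ypow_lt1 y 5 hy). assert (hy6 := ypow_lt1 y 6 hy).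
  assert (hy7 := ypow_lt1 y 7 hy). assert (hy8 := ypow_lt1 y 8 hy). assert (hy9 := ypow_lt1 y 9 hy).
  assert (hy11 := ypow_lt1 y 11 hy).
  unfold L0Y. clearbody a b c d e f Z V.
  specialize (hy1 ltac:(lia)); specialize (hy2 ltac:(lia)); specialize (hy3 ltac:(lia));
  specialize (hy4 ltac:(lia)); specialize (hy5 ltac:(lia)); specialize (hy6 ltac:(lia));
  specialize (hy7 ltac:(lia)); specialize (hy8 ltac:(lia)); specialize (hy9 ltac:(lia));
  specialize (hy11 ltac:(lia)).
  assert (n6 : 1 - y^6*Z <> 0) by nra. assert (n7 : 1 - y^7*Z <> 0) by nra.
  assert (n11 : 1 - y^11*Z <> 0) by nra.
  assert (1 - y^6 <> 0) by lra. assert (1 - y^5 <> 0) by lra. assert (1 - y^2 <> 0) by lra.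
  assert (1 + y^3 <> 0) by lra.
  field; repeat split; lra.
Qed.

Lemma sumY y n : 0 < y < 1 -> sum_f_R0 (fun k => tY y (S k)) n = L0Y y - GY y (S n).
Proof.
  intros hy. induction n as [|n IH].
  - simpl. rewrite tel by auto. unfold GY at 1, PP. simpl. field.
  - simpl sum_f_R0. rewrite IH, tel by auto. ring.
Qed.

Lemma PP_shift y k m l : (k + 6 = m)%nat -> 0 < y < 1 -> (1 <= k)%nat ->
  Un_cv (PP y k) l -> is_lim_seq (fun n => PP y m (S n)) (l / (1 - y ^ k)).
Proof.
  intros hkm hy hk hl.
  apply is_lim_seq_ext with (u := fun n => PP y k (S (S n)) / (1 - y ^ k)).
  { intros n. unfold PP. rewrite (P_S' (y^k) _ (y^m) (S n)).
    assert (0 < y^k < 1) by (apply ypow_lt1; [auto|lia]). field. lra.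
    subst m. rewrite pow_add. ring. }
  apply is_lim_seq_div'. 2: apply is_lim_seq_const.
  2: { assert (0 < y^k < 1) by (apply ypow_lt1; [auto|lia]). lra. }
  apply is_lim_seq_incr_1 with (u := fun n => PP y k (S n)).
  apply is_lim_seq_incr_1 with (u := PP y k).
  apply is_lim_seq_Reals. exact hl.
Qed.

Lemma core y (hy : 0 < y < 1) (A B C D E F : R)
  (hA : Un_cv (PP y 6) A) (hB : Un_cv (PP y 3) B) (hC : Un_cv (PP y 4) C)
  (hD : Un_cv (PP y 2) D) (hE : Un_cv (PP y 1) E) (hF : Un_cv (PP y 5) F) :
  infinite_sum (fun k => tY y (S k))
    (L0Y y - L0Y y * C * (D / (1 - y ^ 2)) * (B / (1 - y ^ 3)) ^ 2
             / (A ^ 2 * (E / (1 - y ^ 1)) * (F / (1 - y ^ 5)))).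
Proof.
  assert (y6 : 0 < y^6 < 1) by (apply ypow_lt1; [auto|lia]).
  assert (h1 : 0 < y^1 < 1) by (apply ypow_lt1; [auto|lia]).
  assert (h5 : 0 < y^5 < 1) by (apply ypow_lt1; [auto|lia]).
  assert (pA : 0 < A) by (apply (P_lim_pos (y^6) (y^6) A); [lra|lra|exact hA]).
  assert (pE : 0 < E) by (apply (P_lim_pos (y^1) (y^6) E); [lra|lra|exact hE]).
  assert (pF : 0 < F) by (apply (P_lim_pos (y^5) (y^6) F); [lra|lra|exact hF]).
  unfold infinite_sum.
  apply Un_cv_ext with (un := fun n => L0Y y - GY y (S n)).
  { intros n. symmetry. apply sumY; auto. }
  apply is_lim_seq_Reals.
  apply is_lim_seq_minus'. apply is_lim_seq_const.
  unfold GY.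
  apply is_lim_seq_div'.
  - apply is_lim_seq_mult'. apply is_lim_seq_mult'. apply is_lim_seq_mult'.
    apply is_lim_seq_const.
    apply is_lim_seq_incr_1 with (u := PP y 4). apply is_lim_seq_Reals; auto.
    apply (PP_shift y 2 8); auto.
    apply is_lim_seq_ext with (u := fun n => PP y 9 (S n) * PP y 9 (S n)). intros; ring.
    replace ((B / (1 - y ^ 3)) ^ 2) with ((B / (1 - y ^ 3)) * (B / (1 - y ^ 3))) by ring.
    apply is_lim_seq_mult'; apply (PP_shift y 3 9); auto.
  - apply is_lim_seq_mult'. apply is_lim_seq_mult'.
    apply is_lim_seq_ext with (u := fun n => PP y 6 (S n) * PP y 6 (S n)). intros; ring.
    replace (A ^ 2) with (A * A) by ring.
    apply is_lim_seq_mult'; apply is_lim_seq_incr_1 with (u := PP y 6); apply is_lim_seq_Reals; auto.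
    apply (PP_shift y 1 7); auto.
    apply (PP_shift y 5 11); auto.
  - assert (0 < E / (1 - y^1)) by (apply Rdiv_lt_0_compat; lra).
    assert (0 < F / (1 - y^5)) by (apply Rdiv_lt_0_compat; lra).
    assert (0 < A^2) by (apply pow_lt; auto).
    apply Rgt_not_eq. apply Rmult_gt_0_compat; [apply Rmult_gt_0_compat|]; lra.
Qed.

Lemma qshift_conv q x n : 0 < q < 1 ->
  qshift q x n = qpoch_part (qpow q (2 * x)) (q ^ 2) n / (1 - q ^ 2) ^ n.
Proof.
  intros hq. assert (h2 : 0 < q^2 < 1) by (split; nra).
  induction n as [|n IH].
  - simpl. field.
  - change (qshift q x (S n)) with (qshift q x n * qnum q (x + INR n)). rewrite IH, P_succ. unfold qnum. change qpow with Rpower.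
    replace (2 * (x + INR n)) with (2 * x + INR (2 * n)) by (rewrite mult_INR; simpl; ring).
    rewrite Rpower_plus, Rpower_pow by lra. rewrite pow_mult.
    simpl pow. field. split. apply pow_nonzero. lra. lra.
Qed.

Lemma qfact_conv q n : 0 < q < 1 ->
  qfact q n = qpoch_part (q ^ 2) (q ^ 2) n / (1 - q ^ 2) ^ n.
Proof.
  intros hq. assert (h2 : 0 < q^2 < 1) by (split; nra).
  induction n as [|n IH].
  - simpl. field.
  - change (qfact q (S n)) with (qfact q n * qnum q (INR (S n))). rewrite IH, P_succ. unfold qnum. change qpow with Rpower.
    replace (2 * INR (S n)) with (INR (2 + 2 * n)).
    2: { rewrite plus_INR, mult_INR, (S_INR n). change (INR 2) with (1+1). lra. }
    rewrite Rpower_pow by lra. rewrite pow_add, pow_mult.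
    simpl pow. field. split. apply pow_nonzero. lra. lra.
Qed.

Theorem mainTheorem13 (q : R) (hq0 : 0 < q) (hq1 : q < 1)
  (A B C D E F : R)
  (hA : qpoch_inf_is (q ^ 2) (q ^ 2) A)        (* (q^2;q^2)_oo *)
  (hB : qpoch_inf_is q (q ^ 2) B)              (* (q;q^2)_oo *)
  (hC : qpoch_inf_is (qpow q (4/3)) (q ^ 2) C)
  (hD : qpoch_inf_is (qpow q (2/3)) (q ^ 2) D)
  (hE : qpoch_inf_is (qpow q (1/3)) (q ^ 2) E)
  (hF : qpoch_inf_is (qpow q (5/3)) (q ^ 2) F) :
  let piq := (1 - q ^ 2) * qpow q (1/4) * A ^ 2 / B ^ 2 in
  let L0 := qpow q (2/3) / ((1 + q) * qnum q (1/3) * qnum q (5/6)) in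
  let RHS := qnum q (1/6) / (qnum q (1/3) ^ 2 * qnum q (1/2))
             * (C * D * qpow q (11/12) / (E * F * piq)) in
  infinite_sum (fun k => term13 q (Datatypes.S k)) (L0 - RHS).
Proof.
  cbv zeta.
  remember (qpow q (1/3)) as y eqn:Hy.
  assert (hy : 0 < y < 1).
  { rewrite Hy. unfold qpow. split. apply exp_pos.
    assert (ln q < 0) by (rewrite <- ln_1; apply ln_increasing; lra).
    assert (Hx : exp (1/3 * ln q) < exp 0) by (apply exp_increasing; lra). rewrite exp_0 in Hx. exact Hx. }
  assert (ypow : forall k e, e = INR k / 3 -> qpow q e = y ^ k).
  { intros k e ->. rewrite Hy. unfold qpow.
    change (exp (INR k / 3 * ln q) = (Rpower q (1/3)) ^ k).
    rewrite <- Rpower_pow by (unfold Rpower; apply exp_pos).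
    rewrite Rpower_mult. unfold Rpower. f_equal. field. }
  assert (hq3 : q = y ^ 3).
  { rewrite <- (ypow 3%nat 1) by (simpl; field). symmetry. apply Rpower_1. lra. }
  set (w := qpow q (1/4)).
  assert (hw : 0 < w) by (unfold w, qpow; apply exp_pos).
  assert (h1112 : qpow q (11/12) = w * y ^ 2).
  { unfold w. rewrite <- (ypow 2%nat (2/3)) by (simpl; field). unfold qpow.
    rewrite <- exp_plus. f_equal. field. }
  assert (hterm : forall n, term13 q n = tY y n).
  { intros n. unfold term13. rewrite !qshift_conv, !qfact_conv by lra.
    rewrite (ypow 3%nat (2 * (1/2))) by (simpl; field).
    rewrite (ypow 2%nat (2 * (1/3))) by (simpl; field).
    rewrite (ypow 4%nat (2 * (2/3))) by (simpl; field).
    rewrite (ypow 7%nat (2 * (7/6))) by (simpl; field).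
    rewrite (ypow 5%nat (2 * (5/6))) by (simpl; field).
    rewrite hq3. replace ((y^3)^2) with (y^6) by ring.
    unfold tY, PP. reflexivity. }
  unfold qnum.
  rewrite (ypow 2%nat (2/3)) by (simpl; field).
  rewrite (ypow 2%nat (2 * (1/3))) by (simpl; field).
  rewrite (ypow 5%nat (2 * (5/6))) by (simpl; field).
  rewrite (ypow 1%nat (2 * (1/6))) by (simpl; field).
  rewrite (ypow 3%nat (2 * (1/2))) by (simpl; field).
  rewrite h1112.
  unfold qpoch_inf_is in *.
  rewrite (ypow 4%nat (4/3)) in hC by (simpl; field).
  rewrite (ypow 2%nat (2/3)) in hD by (simpl; field).
  replace y with (y ^ 1) in hE at 1 by ring.
  rewrite (ypow 5%nat (5/3)) in hF by (simpl; field).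
  rewrite hq3 in hA, hB, hC, hD, hE, hF |- *.
  replace ((y^3)^2) with (y^6) in hA, hB, hC, hD, hE, hF |- * by ring.
  pose proof (core y hy A B C D E F hA hB hC hD hE hF) as HC.
  replace (fun k => term13 (y^3) (S k)) with (fun k => tY y (S k)).
  2: { extensionality k. rewrite <- hq3. symmetry. apply hterm. }
  assert (y6 : 0 < y^6 < 1) by (apply ypow_lt1; [auto|lia]).
  assert (h1 : 0 < y^1 < 1) by (apply ypow_lt1; [auto|lia]).
  assert (h2 : 0 < y^2 < 1) by (apply ypow_lt1; [auto|lia]).
  assert (h3 : 0 < y^3 < 1) by (apply ypow_lt1; [auto|lia]).
  assert (h5 : 0 < y^5 < 1) by (apply ypow_lt1; [auto|lia]).
  assert (pA : 0 < A) by (apply (P_lim_pos (y^6) (y^6) A); [lra|lra|exact hA]).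
  assert (pB : 0 < B) by (apply (P_lim_pos (y^3) (y^6) B); [lra|lra|exact hB]).
  assert (pE : 0 < E) by (apply (P_lim_pos (y^1) (y^6) E); [lra|lra|exact hE]).
  assert (pF : 0 < F) by (apply (P_lim_pos (y^5) (y^6) F); [lra|lra|exact hF]).
  match goal with |- infinite_sum _ ?l => replace l with
    (L0Y y - L0Y y * C * (D / (1 - y ^ 2)) * (B / (1 - y ^ 3)) ^ 2
             / (A ^ 2 * (E / (1 - y ^ 1)) * (F / (1 - y ^ 5)))) end.
  exact HC.
  unfold L0Y. simpl pow in *.
  field; repeat split; nra.
Qed.
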